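(* The complete bipartite graph $K_{4,4}$ is B-factorizable.
   Context: Let $V$ be a finite set with $|V|$ even. $K=\binom{V}{2}$ is the set of 2-element subsets of $V$. An equal partition of $V$ is an unordered pair $\{H,A\}$ of disjoint subsets with $H\cup A=V$ and $|H|=|A|=|V|/2$; $C=C(V)$ is the set of equal partitions. For $c=\{H,A\}\in C$, $B_c$ is the complete bipartite graph with parts $H$ and $A$. Vectors live in $\mathbb N^{K\cup C}$ with $\mathbb N=\{0,1,2,\dots\}$; $v|_K$ denotes the restriction to coordinates in $K$. For $E\subseteq K$, $\chi_E\in\{0,1\}^K$ is its indicator vector. For $E\subseteq K$ and $c\in C$, $\chi_{E,c}\in\mathbb N^{K\cup C}$ has $K$-components $\chi_E$ and $C$-components equal to the indicator of $c$. $PM(V)=\{\chi_{q,c}: c\in C,\ q\text{ a perfect matching of }B_c\}$. For $\mathcal M\subseteq\mathbb N^{K\cup C}$, $\mathbf N(\mathcal M)$ is the set of finite nonnegative integer combinations of elements of $\mathcal M$, and $\overline{\mathbf N}(\mathcal M)=\{v\in\mathbb N^{K\cup C}: kv\in\mathbf N(\mathcal M)\text{ for some integer }k\ge1\}$. A regular graph $G=(V,E)$ is B-factorizable if every $v\in\overline{\mathbf N}(PM(V))$ with $v|_K=\chi_E$ belongs to $\mathbf N(PM(V))$. *)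

(* Defs.v *)
From mathcomp Require Import all_boot.
Set Implicit Arguments. Unset Strict Implicit. Unset Printing Implicit Defensive.

Definition Kt (V : finType) := {e : {set V} | #|e| == 2}.

(* C = equal partitions {H, A}, represented as the set of its two blocks *)
Definition is_eqpart (V : finType) (P : {set {set V}}) : bool :=
  [exists H : {set V}, (#|H|.*2 == #|V|) && (P == [set H; ~: H])].
Definition Ct (V : finType) := {P : {set {set V}} | is_eqpart P}.

Definition idx (V : finType) := (Kt V + Ct V)%type.
Definition vec (V : finType) := {ffun idx V -> nat}.

Definition chi (V : finType) (E : {set Kt V}) (e : Kt V) : nat := e \in E.

Definition chiEc (V : finType) (E : {set Kt V}) (c : Ct V) : vec V :=
  [ffun i => match i with inl e => nat_of_bool (e \in E)
                        | inr c' => nat_of_bool (c' == c) end].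

(* q is a perfect matching of B_c: every edge of q joins the two blocks of c
   (meets each block in exactly one vertex), and every vertex lies in
   exactly one edge of q *)
Definition is_pm_of (V : finType) (c : Ct V) (q : {set Kt V}) : bool :=
  [forall e in q, forall X in val c, #|val e :&: X| == 1] &&
  [forall x : V, #|[set e in q | x \in val e]| == 1].

Definition PM (V : finType) : pred (vec V) :=
  fun v => [exists c : Ct V, exists q : {set Kt V}, is_pm_of c q && (v == chiEc q c)].

(* N(M): finite nonnegative integer combinations (sums of finite lists with repetition) *)
Definition NN (V : finType) (M : pred (vec V)) (v : vec V) : Prop :=
  exists s : seq (vec V), all M s /\ forall i, v i = \sum_(m <- s) m i.

Definition NNbar (V : finType) (M : pred (vec V)) (v : vec V) : Prop :=
  exists k : nat, 0 < k /\ NN M [ffun i => k * v i].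

Definition B_factorizable (V : finType) (E : {set Kt V}) : Prop :=
  forall v : vec V, NNbar (@PM V) v -> (forall e : Kt V, v (inl e) = chi E e) ->
    NN (@PM V) v.

Definition Kbip (V : finType) (H : {set V}) : {set Kt V} :=
  [set e : Kt V | #|val e :&: H| == 1].

(* Main.v *)
Require Import Defs.
From mathcomp Require Import all_boot.
Set Implicit Arguments. Unset Strict Implicit. Unset Printing Implicit Defensive.

(* Proof by reflection: every vector v|_C satisfying a family of
   valid linear inequalities (derived from the fractional decomposition) admits an
   integral decomposition; checked by computation below. *)

Fixpoint allbits (n : nat) : seq (seq bool) :=
  if n is n'.+1 then map (cons true) (allbits n') ++ map (cons false) (allbits n')
  else [:: [::]].
Fixpoint tuples (n m : nat) : seq (seq nat) :=
  if n is n'.+1 then flatten [seq map (cons i) (tuples n' m) | i <- iota 0 m]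
  else [:: [::]].

Definition labels : seq (seq bool) :=
  [seq b <- allbits 8 | head false b && (count id b == 4)].
Definition perms24 : seq (seq nat) := [seq s <- tuples 4 4 | uniq s].
Definition cnt (F : seq (nat * nat)) (s : seq nat) : nat :=
  count (fun e => nth 0 s e.1 == e.2) F.
Definition compat (b : seq bool) (s : seq nat) : bool :=
  all (fun i => nth false b i != nth false b (4 + nth 0 s i)) (iota 0 4).
Definition mn (F : seq (nat * nat)) (b : seq bool) : nat :=
  foldr minn 16 [seq cnt F s | s <- perms24 & compat b s].

Fixpoint expand_aux (k : nat) (w : seq nat) : seq nat :=
  if w is x :: w' then nseq x k ++ expand_aux k.+1 w' else [::].
Definition expand w := expand_aux 0 w.
Definition Flist : seq (seq (nat*nat)) := [:: [:: (0,0); (0,1); (0,3)]; [:: (0,0); (0,2); (0,3)]; [:: (0,1); (0,2); (0,3)]; [:: (0,0); (0,1); (0,2)]; [:: (0,0); (1,0); (3,0)]; [:: (1,1); (1,2); (1,3)]; [:: (0,0); (1,0); (2,0)]; [:: (0,1); (1,1); (3,1)]; [:: (0,2); (1,2); (3,2)]; [:: (0,3); (1,3); (3,3)]; [:: (1,0); (1,1); (1,2)]; [:: (0,3); (1,3); (2,3)]; [:: (1,0); (1,1); (1,3)]; [:: (1,0); (1,2); (1,3)]; [:: (0,1); (1,1); (2,1)]; [:: (0,2); (1,2); (2,2)]; [:: (0,0); (0,1); (1,0); (1,1)]; [:: (1,0); (1,2); (3,0); (3,2)]; [:: (2,0); (2,1); (3,0); (3,1)]; [:: (1,1); (1,3);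 (3,1); (3,3)]; [:: (1,0); (1,3); (2,0); (2,3)]; [:: (0,0); (0,3); (3,0); (3,3)]; [:: (1,0); (1,1); (3,0); (3,1)]; [:: (0,0); (0,2); (1,0); (1,2)]; [:: (0,1); (0,3); (1,1); (1,3)]; [:: (1,2); (1,3); (3,2); (3,3)]; [:: (0,1); (0,2); (1,1); (1,2)]; [:: (0,0); (0,3); (1,0); (1,3)]; [:: (0,0); (0,1); (3,0); (3,1)]; [:: (1,0); (1,1); (2,0); (2,1)]; [:: (1,1); (1,2); (3,1); (3,2)]; [:: (1,0); (1,3); (3,0); (3,3)]; [:: (0,0); (0,2); (3,0); (3,2)]; [:: (0,1); (0,3); (3,1); (3,3)]; [:: (2,3)]; [:: (0,0)]; [:: (0,1)]; [:: (3,0)]; [:: (0,2)]; [:: (3,1)]; [:: (0,3)]; [:: (1,0)]; [:: (1,1)]; [:: (1,2)]; [:: (1,3)]; [:: (2,0)]; [:: (2,1)]; [:: (3,2)]; [:: (2,2)]; [:: (3,3)]; [:: (0,0); (0,1)]; [:: (0,0); (0,2)]; [:: (0,0); (0,3)]; [:: (0,1); (0,2)]; [:: (0,1); (0,3)]; [:: (0,2); (0,3)]; [:: (0,3); (3,3)]; [:: (0,0); (1,0)]; [:: (1,0); (3,0)]; [:: (1,1); (3,1)]; [:: (0,1); (1,1)]; [:: (1,0); (1,1)]; [:: (1,2); (3,2)]; [:: (0,2); (1,2)]; [:: (1,0); (1,2)]; [:: (1,1); (1,2)]; [:: (0,3); (2,3)]; [:: (1,3); (2,3)]; [:: (1,3);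 (3,3)]; [:: (0,0); (3,0)]; [:: (0,3); (1,3)]; [:: (1,0); (1,3)]; [:: (1,1); (1,3)]; [:: (1,2); (1,3)]; [:: (0,0); (2,0)]; [:: (2,0); (2,3)]; [:: (2,0); (3,0)]; [:: (0,1); (3,1)]; [:: (1,0); (2,0)]; [:: (3,0); (3,1)]; [:: (0,1); (2,1)]; [:: (2,1); (2,3)]; [:: (2,1); (3,1)]; [:: (0,2); (3,2)]; [:: (1,1); (2,1)]; [:: (3,0); (3,2)]; [:: (2,0); (2,1)]; [:: (3,1); (3,2)]; [:: (2,2); (3,2)]; [:: (2,2); (2,3)]; [:: (0,2); (2,2)]; [:: (1,2); (2,2)]; [:: (2,3); (3,3)]; [:: (3,0); (3,3)]; [:: (2,0); (2,2)]; [:: (3,1); (3,3)]; [:: (2,1); (2,2)]; [:: (3,2); (3,3)]].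
Definition decs : seq (seq (seq nat)) := [:: [:: [:: 0; 1; 2; 3]; [:: 1; 0; 3; 2]; [:: 2; 3; 0; 1]; [:: 3; 2; 1; 0]]; [:: [:: 0; 1; 2; 3]; [:: 1; 0; 3; 2]; [:: 2; 3; 1; 0]; [:: 3; 2; 0; 1]]; [:: [:: 0; 1; 2; 3]; [:: 1; 2; 3; 0]; [:: 2; 3; 0; 1]; [:: 3; 0; 1; 2]]; [:: [:: 0; 1; 2; 3]; [:: 1; 3; 0; 2]; [:: 2; 0; 3; 1]; [:: 3; 2; 1; 0]]; [:: [:: 0; 1; 3; 2]; [:: 1; 0; 2; 3]; [:: 2; 3; 0; 1]; [:: 3; 2; 1; 0]]; [:: [:: 0; 1; 3; 2]; [:: 1; 0; 2; 3]; [:: 2; 3; 1; 0]; [:: 3; 2; 0; 1]]; [:: [:: 0; 1; 3; 2]; [:: 1; 2; 0; 3]; [:: 2; 3; 1; 0]; [:: 3; 0; 2; 1]]; [:: [:: 0; 1; 3; 2]; [:: 1; 3; 2; 0]; [:: 2; 0; 1; 3]; [:: 3; 2; 0; 1]]; [:: [:: 0; 2; 1; 3]; [:: 1; 0; 3; 2]; [:: 2; 3; 0; 1]; [:: 3; 1; 2; 0]]; [:: [:: 0; 2; 1; 3]; [:: 1; 3; 0; 2]; [:: 2; 0; 3; 1]; [:: 3; 1; 2; 0]]; [:: [:: 0; 2; 1; 3]; [:: 1; 3; 0; 2]; [:: 2; 1; 3; 0]; [:: 3; 0; 2; 1]]; [:: [:: 0; 2; 1; 3]; [:: 1; 3; 2;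 0]; [:: 2; 0; 3; 1]; [:: 3; 1; 0; 2]]; [:: [:: 0; 2; 3; 1]; [:: 1; 0; 2; 3]; [:: 2; 3; 1; 0]; [:: 3; 1; 0; 2]]; [:: [:: 0; 2; 3; 1]; [:: 1; 3; 0; 2]; [:: 2; 0; 1; 3]; [:: 3; 1; 2; 0]]; [:: [:: 0; 2; 3; 1]; [:: 1; 3; 2; 0]; [:: 2; 0; 1; 3]; [:: 3; 1; 0; 2]]; [:: [:: 0; 2; 3; 1]; [:: 1; 3; 2; 0]; [:: 2; 1; 0; 3]; [:: 3; 0; 1; 2]]; [:: [:: 0; 3; 1; 2]; [:: 1; 0; 2; 3]; [:: 2; 1; 3; 0]; [:: 3; 2; 0; 1]]; [:: [:: 0; 3; 1; 2]; [:: 1; 2; 0; 3]; [:: 2; 0; 3; 1]; [:: 3; 1; 2; 0]]; [:: [:: 0; 3; 1; 2]; [:: 1; 2; 0; 3]; [:: 2; 1; 3; 0]; [:: 3; 0; 2; 1]]; [:: [:: 0; 3; 1; 2]; [:: 1; 2; 3; 0]; [:: 2; 1; 0; 3]; [:: 3; 0; 2; 1]]; [:: [:: 0; 3; 2; 1]; [:: 1; 0; 3; 2]; [:: 2; 1; 0; 3]; [:: 3; 2; 1; 0]]; [:: [:: 0; 3; 2; 1]; [:: 1; 2; 0; 3]; [:: 2; 1; 3; 0]; [:: 3; 0; 1; 2]]; [:: [:: 0; 3; 2; 1]; [:: 1; 2; 3; 0]; [:: 2; 0; 1; 3]; [:: 3; 1; 0; 2]]; [:: [:: 0; 3; 2;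 1]; [:: 1; 2; 3; 0]; [:: 2; 1; 0; 3]; [:: 3; 0; 1; 2]]].

Definition all16 : seq (nat * nat) := [seq (i, j) | i <- iota 0 4, j <- iota 0 4].

Definition MNrows := [seq [seq mn F b | F <- Flist] | b <- labels].
Definition PCs := [seq size F | F <- Flist].
Fixpoint viol (pcs r1 r2 r3 r4 : seq nat) : bool :=
  match pcs, r1, r2, r3, r4 with
  | p :: pcs', x1 :: r1', x2 :: r2', x3 :: r3', x4 :: r4' =>
      (p < x1 + x2 + x3 + x4) || viol pcs' r1' r2' r3' r4'
  | _, _, _, _, _ => false end.
Definition CDrows := [seq [seq [seq compat b s | s <- D] | D <- decs] | b <- labels].
Definition nb (x : seq bool) j := nth false x j.
Definition match4 (x1 x2 x3 x4 : seq bool) : option (seq nat) :=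
  let fix go (xs : seq (seq bool)) (used : seq nat) : option (seq nat) :=
    match xs with
    | [::] => Some (rev used)
    | x :: xs' =>
      let fix tryj (js : seq nat) := match js with
        | [::] => None
        | j :: js' => if nb x j && (j \notin used) then
                        (if go xs' (j :: used) is Some r then Some r else tryj js')
                      else tryj js' end in tryj [:: 0; 1; 2; 3] end in
  go [:: x1; x2; x3; x4] [::].
Fixpoint findr (Ds : seq (seq (seq nat))) (r1 r2 r3 r4 : seq (seq bool))
  : option (seq (seq nat) * seq nat) :=
  match Ds, r1, r2, r3, r4 with
  | D :: Ds', x1 :: r1', x2 :: r2', x3 :: r3', x4 :: r4' =>
      if match4 x1 x2 x3 x4 is Some p then Some (D, p) else findr Ds' r1' r2' r3' r4'
  | _, _, _, _, _ => None end.

Definition mkps (ms : seq nat) (D : seq (seq nat)) (p : seq nat) :=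
  [seq (nth 0 ms k, nth [::] D (nth 0 p k)) | k <- iota 0 4].
Definition latin (ps : seq (nat * seq nat)) :=
  all (fun i => all (fun j => count (fun pr => nth 0 pr.2 i == j) ps == 1) (iota 0 4)) (iota 0 4).
Definition validps (ms : seq nat) (ps : seq (nat * seq nat)) :=
  [&& [seq pr.1 | pr <- ps] == ms,
      all (fun pr => (pr.2 \in perms24) && compat (nth [::] labels pr.1) pr.2) ps
    & latin ps].
Definition row {T} (M : seq (seq T)) (ms : seq nat) k := nth [::] M (nth 0 ms k).
Definition Pfull (M : seq (seq nat)) (C : seq (seq (seq bool))) (ms : seq nat) :=
  viol PCs (row M ms 0) (row M ms 1) (row M ms 2) (row M ms 3) ||
  if findr decs (row C ms 0) (row C ms 1) (row C ms 2) (row C ms 3) is Some (D, p)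
  then validps ms (mkps ms D p) else false.
Definition allms (P : seq nat -> bool) :=
  all (fun a => all (fun b => all (fun c => all (fun d => P [:: a; b; c; d])
     (iota c (35 - c))) (iota b (35 - b))) (iota a (35 - a))) (iota 0 35).
Definition heavyb := let M := MNrows in let C := CDrows in allms (Pfull M C).



Lemma mem_allbits b : b \in allbits (size b).
Proof.
elim: b => [|x b IH] //=; rewrite mem_cat; apply/orP; case: x; [left|right];
  exact: map_f.
Qed.

Lemma mem_tuples s m : all (fun x => x < m) s -> s \in tuples (size s) m.
Proof.
elim: s => [|x s IH] //= /andP [xm /IH Hs].
apply/flatten_mapP; exists x; first by rewrite mem_iota.
exact: map_f.
Qed.

Lemma mem_labels b : size b = 8 -> head false b -> count id b = 4 -> b \in labels.
Proof.
move=> sb hb cb; rewrite mem_filter hb cb eqxx /=; by move: (mem_allbits b); rewrite sb.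
Qed.

Lemma mem_perms s : size s = 4 -> all (fun x => x < 4) s -> uniq s -> s \in perms24.
Proof. move=> ss hs us; rewrite mem_filter us /=; by move: (mem_tuples hs); rewrite ss. Qed.

Lemma labels_ok : all (fun b => (size b == 8) && head false b && (count id b == 4)) labels.
Proof. by vm_compute. Qed.
Lemma labels_uniq : uniq labels. Proof. by vm_compute. Qed.
Lemma size_labels : size labels = 35. Proof. by vm_compute. Qed.

Lemma perms_ok : all (fun s => [&& size s == 4, all (fun x => x < 4) s, uniq s,
   all (fun u => count (fun i => (u == i) || (u == 4 + nth 0 s i)) (iota 0 4) == 1) (iota 0 8)
   & cnt all16 s == 4]) perms24.
Proof. by vm_compute. Qed.

Lemma Flist_ok : all (all (fun t => (t.1 < 4) && (t.2 < 4))) (all16 :: Flist).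
Proof. by vm_compute. Qed.

Lemma foldr_minn_le d (l : seq nat) x : x \in l -> foldr minn d l <= x.
Proof.
elim: l => [|y l IH] //=; rewrite in_cons => /orP [/eqP <-|/IH h].
- exact: geq_minl.
- by rewrite geq_min h orbT.
Qed.

Lemma mn_le F b s : s \in perms24 -> compat b s -> mn F b <= cnt F s.
Proof.
move=> sp cs; apply: foldr_minn_le; apply: map_f; by rewrite mem_filter cs.
Qed.

Lemma viol_spec (Fl : seq (seq (nat * nat))) b1 b2 b3 b4 :
  viol [seq size F | F <- Fl] [seq mn F b1 | F <- Fl] [seq mn F b2 | F <- Fl]
       [seq mn F b3 | F <- Fl] [seq mn F b4 | F <- Fl] ->
  exists2 F, F \in Fl & size F < mn F b1 + mn F b2 + mn F b3 + mn F b4.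
Proof.
elim: Fl => [|F Fl IH] //= /orP [h|/IH [F' h1 h2]].
- by exists F; rewrite ?mem_head.
- by exists F'; rewrite // in_cons h1 orbT.
Qed.

Lemma sum_expand_aux (f : nat -> nat) k w :
  \sum_(x <- expand_aux k w) f x = \sum_(i < size w) nth 0 w i * f (k + i).
Proof.
elim: w k => [|x w IH] k /=; first by rewrite big_nil big_ord0.
rewrite big_cat big_nseq IH big_ord_recl /= addn0; congr (_ + _).
  by rewrite iter_addn_0 mulnC.
by apply: eq_bigr => i _; rewrite /bump /= addSnnS.
Qed.

Lemma pw_expand_aux k w :
  pairwise leq (expand_aux k w) && all (fun x => k <= x < k + size w) (expand_aux k w).
Proof.
elim: w k => [|x w IH] k //=.
case/andP: (IH k.+1) => s1 a1.
rewrite all_cat pairwise_cat s1 andbT -andbA; apply/and4P; split.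
- apply/allrelP => y z /nseqP [-> _] zi.
  by case/andP: (allP a1 z zi) => h _; exact: ltnW.
- by elim: x => //= x ->; rewrite andbT; apply/allP => y /nseqP [-> _].
- by apply/allP => y /nseqP [-> _]; rewrite leqnn /= addnS ltnS leq_addr.
- by apply: sub_all a1 => y /andP [h1 h2]; rewrite ltnW //= addnS -addSn.
Qed.

Lemma card_bits (b : seq bool) : size b = 8 -> #|[set i : 'I_8 | nth false b i]| = count id b.
Proof.
move=> sb.
rewrite -sum1_card -sum1_count big_mkcond /= (big_mkcond id).
rewrite (big_nth false) sb big_mkord; apply: eq_bigr => i _.
by rewrite inE; case: (nth false b i).
Qed.

Lemma card_inter2 (T : finType) (x y : T) (X : {set T}) :
  x != y -> #|[set x; y] :&: X| = (x \in X) + (y \in X).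
Proof.
move=> nxy.
case xX: (x \in X); case yX: (y \in X).
- have -> : [set x; y] :&: X = [set x; y].
    by apply/setP => z; rewrite !inE; have [->|zx] := eqVneq z x; rewrite ?xX ?yX ?(eq_sym y x) ?(negbTE nxy) //=; have [->|zy] := eqVneq z y; rewrite ?xX ?yX ?andbT ?andbF //.
  by rewrite cards2 nxy.
- have -> : [set x; y] :&: X = [set x].
    by apply/setP => z; rewrite !inE; have [->|zx] := eqVneq z x; rewrite ?xX ?yX ?(eq_sym y x) ?(negbTE nxy) //=; have [->|zy] := eqVneq z y; rewrite ?xX ?yX ?andbT ?andbF //.
  by rewrite cards1.
- have -> : [set x; y] :&: X = [set y].
    apply/setP => z; rewrite !inE; have [->|zx] := eqVneq z x; rewrite ?xX ?yX ?(eq_sym y x) ?(negbTE nxy) //=; have [->|zy] := eqVneq z y; rewrite ?xX ?yX ?andbT ?andbF // //.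
  by rewrite cards1.
- have -> : [set x; y] :&: X = set0.
    by apply/setP => z; rewrite !inE; have [->|zx] := eqVneq z x; rewrite ?xX ?yX ?(eq_sym y x) ?(negbTE nxy) //=; have [->|zy] := eqVneq z y; rewrite ?xX ?yX ?andbT ?andbF //.
  by rewrite cards0.
Qed.

Lemma lt48 j : j < 4 -> 4 + j < 8.
Proof. by move=> h; rewrite -[8]/(4 + 4) ltn_add2l. Qed.
Lemma lt_48 i : i < 4 -> i < 8.
Proof. by move=> h; exact: leq_trans h _. Qed.
Lemma nlt4 j : (4 + j < 4) = false.
Proof. by rewrite ltnNge leq_addr. Qed.

Lemma labP b : b \in labels -> [/\ size b = 8, head false b & count id b = 4].
Proof. by move=> hb; case/andP: (allP labels_ok b hb) => /andP [/eqP -> ->] /eqP ->. Qed.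

Lemma count1_iota (p : pred nat) n : count p (iota 0 n) = 1 ->
  exists a, [/\ a < n, p a & forall i, i < n -> p i -> i = a].
Proof.
rewrite -size_filter; case E: (filter p (iota 0 n)) => [|a [|]] //= _.
have ha : a \in filter p (iota 0 n) by rewrite E mem_head.
rewrite mem_filter mem_iota add0n /= in ha; case/andP: ha => pa ha.
exists a; split => // i hi pi.
have : i \in filter p (iota 0 n) by rewrite mem_filter pi mem_iota.
by rewrite E inE => /eqP.
Qed.

Lemma permP s : s \in perms24 -> [/\ size s = 4, forall i, i < 4 -> nth 0 s i < 4,
   forall u, u < 8 -> count (fun i => (u == i) || (u == 4 + nth 0 s i)) (iota 0 4) = 1
   & cnt all16 s = 4].
Proof.
move=> hs; case/and5P: (allP perms_ok s hs) => /eqP s4 /allP al _ /allP hu /eqP hc.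
split => //.
- by move=> i hi; apply: al; apply: mem_nth; rewrite s4.
- by move=> u hu8; apply/eqP; apply: hu; rewrite mem_iota.
Qed.

Lemma sum_one (T : eqType) (r : seq T) x (F : T -> nat) :
  uniq r -> x \in r -> \sum_(y <- r) F y * (y == x) = F x.
Proof.
move=> ur xr; rewrite (big_rem x) //= eqxx muln1 big_seq big1 ?addn0 // => y.
move=> yr; have [e|ne] := eqVneq y x; last by rewrite muln0.
by move: yr; rewrite e (mem_rem_uniqF x ur).
Qed.

Lemma sum_count (T : Type) (P : pred T) (r : seq T) :
  \sum_(t <- r) (P t : nat) = count P r.
Proof. by elim: r => [|x r IH]; rewrite ?big_nil ?big_cons ?IH. Qed.

Lemma sum_labels (h : seq bool -> nat) :
  \sum_(b <- labels) h b = \sum_(i <- iota 0 35) h (nth [::] labels i).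
Proof. by rewrite (big_nth [::]) size_labels. Qed.

Lemma heavy : heavyb. Proof. vm_compute. reflexivity. Qed.

Section Abs.
Variables (V : finType) (H : {set V}) (g : 'I_8 -> V) (phi : V -> 'I_8).
Hypotheses (gK : cancel g phi) (phiK : cancel phi g)
  (gH : forall i, (g i \in H) = (i < 4)) (cV : #|V| = 8) (cH : #|H| = 4).

Definition G (n : nat) : V := g (inord n).

Lemma phiG n : n < 8 -> (phi (G n) : nat) = n.
Proof. by move=> h; rewrite /G gK inordK. Qed.

Lemma G_phi x : G (phi x) = x.
Proof. by rewrite /G inord_val phiK. Qed.

Lemma GH n : n < 8 -> (G n \in H) = (n < 4).
Proof. by move=> h; rewrite /G gH inordK. Qed.

Lemma eqG x n : n < 8 -> (x == G n) = (phi x == n :> nat).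
Proof.
move=> h; apply/eqP/eqP => [->|<-]; first exact: phiG.
by rewrite G_phi.
Qed.

Definition eset i j := [set G i; G (4 + j)].

Lemma Gneq i j : i < 4 -> j < 4 -> G i != G (4 + j).
Proof.
move=> hi hj; apply/negP => /eqP e.
have : G i \in H by rewrite GH ?hi ?lt_48.
by rewrite e GH ?nlt4 ?lt48.
Qed.

Lemma eset_card i j : i < 4 -> j < 4 -> #|eset i j| == 2.
Proof. by move=> hi hj; rewrite cards2 Gneq. Qed.

Definition e0 : Kt V := exist _ (eset 0 0) (@eset_card 0 0 isT isT).
Definition Ek i j : Kt V := insubd e0 (eset i j).

Lemma val_Ek i j : i < 4 -> j < 4 -> val (Ek i j) = eset i j.
Proof. by move=> hi hj; rewrite /Ek insubdK // unfold_in eset_card. Qed.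

Lemma in_Ek x i j : i < 4 -> j < 4 ->
  (x \in val (Ek i j)) = (phi x == i :> nat) || (phi x == 4 + j :> nat).
Proof.
move=> hi hj; by rewrite val_Ek // !inE !eqG ?lt48 ?lt_48.
Qed.

Lemma Ek_Kbip i j : i < 4 -> j < 4 -> Ek i j \in Kbip H.
Proof.
move=> hi hj; by rewrite inE val_Ek // /eset card_inter2 ?Gneq // !GH ?hi ?nlt4 ?lt48 ?lt_48.
Qed.

Lemma Kbip_Ek e : e \in Kbip H -> exists i j, [/\ i < 4, j < 4 & e = Ek i j].
Proof.
rewrite inE => /eqP he.
have /cards2P [x [y [nxy exy]]] := valP e.
rewrite exy card_inter2 // in he.
have key : forall x y, x \in H -> y \notin H -> x != y -> val e = [set x; y] ->
    exists i j, [/\ i < 4, j < 4 & e = Ek i j].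
  clear nxy exy he x y => x y xH yH nxy exy.
  have hx : phi x < 4 by rewrite -GH // G_phi.
  have hy : 4 <= phi y by rewrite leqNgt -GH // G_phi.
  have hy' : phi y - 4 < 4 by rewrite ltn_subLR // addn4.
  exists (phi x), (phi y - 4); split => //.
  apply: val_inj; rewrite val_Ek // exy /eset subnKC // !G_phi //.
case xH: (x \in H) he; case yH: (y \in H) => //= _.
- by apply: (key x y) => //; rewrite yH.
- apply: (key y x) => //; first exact/negbT.
    by rewrite eq_sym.
  by rewrite exy setUC.
Qed.

Lemma Ek_inj i j i' j' : i < 4 -> j < 4 -> i' < 4 -> j' < 4 ->
  Ek i j = Ek i' j' -> i = i' /\ j = j'.
Proof.
move=> hi hj hi' hj' e.
have h1 : G i \in val (Ek i' j') by rewrite -e in_Ek // phiG ?lt_48 // eqxx.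
have h2 : G (4 + j) \in val (Ek i' j') by rewrite -e in_Ek // phiG ?lt48 // eqxx orbT.
rewrite in_Ek // phiG ?lt_48 // in h1; rewrite in_Ek // phiG ?lt48 // in h2.
case/orP: h1 => [/eqP -> |/eqP h]; last by move: hi; rewrite h nlt4.
case/orP: h2 => [/eqP h|/eqP h]; first by move: hi'; rewrite -h nlt4.
by split => //; apply/eqP; rewrite -(eqn_add2l 4) h.
Qed.

Definition Xb (b : seq bool) : {set V} := [set x | nth false b (phi x)].

Lemma in_Xb b n : n < 8 -> (G n \in Xb b) = nth false b n.
Proof. by move=> h; rewrite inE phiG. Qed.

Lemma card_Xb b : size b = 8 -> #|Xb b| = count id b.
Proof.
move=> sb; rewrite -card_bits //.
have -> : Xb b = phi @^-1: [set i : 'I_8 | nth false b i] by apply/setP => x; rewrite !inE.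
by rewrite -(can2_imset_pre _ gK phiK) card_imset //; exact: can_inj gK.
Qed.

Lemma eqpart_X (X : {set V}) : #|X| = 4 -> is_eqpart [set X; ~: X].
Proof. by move=> hX; apply/existsP; exists X; rewrite hX cV eqxx. Qed.

Definition c0 : Ct V := @exist _ (fun P : {set {set V}} => is_eqpart P) _ (eqpart_X cH).
Definition lab b : Ct V := insubd c0 [set Xb b; ~: Xb b].

Lemma card_Xb_lab b : b \in labels -> #|Xb b| = 4.
Proof.
by move=> hb; case: (labP hb) => sb _ cb; rewrite card_Xb.
Qed.

Lemma val_lab b : b \in labels -> val (lab b) = [set Xb b; ~: Xb b].
Proof. by move=> hb; rewrite /lab insubdK //; apply: eqpart_X; exact: card_Xb_lab. Qed.

Lemma G0_Xb b : b \in labels -> G 0 \in Xb b.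
Proof.
move=> hb; case: (labP hb) => _ + _.
by rewrite in_Xb //; case: b {hb}.
Qed.

Lemma lab_inj b b' : b \in labels -> b' \in labels -> lab b = lab b' -> b = b'.
Proof.
move=> hb hb' e.
have : Xb b \in val (lab b') by rewrite -e val_lab // !inE eqxx.
rewrite val_lab // !inE => /orP [] /eqP E.
- case: (labP hb) => sb _ _; case: (labP hb') => sb' _ _.
  apply: (@eq_from_nth _ false); first by rewrite sb sb'.
  by move=> i; rewrite sb => hi; rewrite -!in_Xb // E.
- by have := G0_Xb hb; rewrite E inE G0_Xb.
Qed.

Lemma lab_surj c : exists2 b, b \in labels & c = lab b.
Proof.
case: c => P hP; case/existsP: (hP) => X /andP [/eqP hX /eqP eP].
have cX : #|X| = 4 by have := congr1 half hX; rewrite cV doubleK.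
pose X' := if G 0 \in X then X else ~: X.
have cX' : #|X'| = 4.
  rewrite /X'; case: ifP => _ //; apply/eqP; by rewrite -(eqn_add2l #|X|) cardsC cX cV.

have eP' : P = [set X'; ~: X'] by rewrite eP /X'; case: ifP; rewrite // setCK setUC.
pose b := mkseq (fun n => G n \in X') 8.
have sb : size b = 8 by rewrite size_mkseq.
have XbE : Xb b = X'.
  by apply/setP => x; rewrite inE nth_mkseq // G_phi.
have hb : b \in labels.
  apply: mem_labels => //.
    by rewrite /b /= /X'; case: ifP => //; rewrite inE => ->.
  by rewrite -(card_Xb sb) XbE.
by exists b => //; apply: val_inj; rewrite val_lab //= XbE eP'.
Qed.

Lemma pm_uniq (c : Ct V) (q : {set Kt V}) x e1 e2 : is_pm_of c q -> e1 \in q -> e2 \in q ->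
  x \in val e1 -> x \in val e2 -> e1 = e2.
Proof.
case/andP=> _ /forallP /(_ x) /cards1P [e he] h1 h2 x1 x2.
have : e1 \in [set e in q | x \in val e] by rewrite inE h1 x1.
have : e2 \in [set e in q | x \in val e] by rewrite inE h2 x2.
by rewrite he !inE => /eqP -> /eqP ->.
Qed.

Lemma pm_extract (c : Ct V) (q : {set Kt V}) : is_pm_of c q -> {subset q <= Kbip H} ->
  exists b s, [/\ b \in labels, c = lab b, s \in perms24, compat b s &
     forall i j, i < 4 -> j < 4 -> (Ek i j \in q) = (nth 0 s i == j)].
Proof.
move=> hpm qK.
have [b hb cb] := lab_surj c.
have ex : forall i, i < 4 -> exists2 j, j < 4 & Ek i j \in q.
  move=> i hi.
  case/andP: hpm => _ /forallP /(_ (G i)) /cards1P [e he].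
  have : e \in [set e in q | G i \in val e] by rewrite he inE.
  rewrite inE => /andP [eq xe].
  have [i' [j [hi' hj ee]]] := Kbip_Ek (qK _ eq).
  move: xe; rewrite ee in_Ek // phiG ?lt_48 // => /orP [/eqP ii|/eqP ij].
    by exists j; rewrite // ii -ee.
  by move: hi; rewrite ij nlt4.
pose s := mkseq (fun i => find (fun j => Ek i j \in q) (iota 0 4)) 4.
have hs : forall i, i < 4 -> nth 0 s i < 4 /\ Ek i (nth 0 s i) \in q.
  move=> i hi; rewrite /s nth_mkseq //.
  have [j hj hq] := ex i hi.
  have hh : has (fun j => Ek i j \in q) (iota 0 4).
    by apply/hasP; exists j; rewrite ?mem_iota.
  have hf : find (fun j => Ek i j \in q) (iota 0 4) < 4.
    by rewrite -[X in _ < X](size_iota 0 4) -has_find.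
  by have := nth_find 0 hh; rewrite nth_iota // add0n.
have key : forall i j, i < 4 -> j < 4 -> (Ek i j \in q) = (nth 0 s i == j).
  move=> i j hi hj; case: (hs i hi) => h1 h2; apply/idP/eqP => [hq|<-] //.
  have := pm_uniq hpm hq h2.
  move=> /(_ (G i)); rewrite !in_Ek // phiG ?lt_48 // eqxx => /(_ isT isT).
  by case/Ek_inj => // _ ->.
exists b, s; split => //.
- apply: mem_perms; first by rewrite size_mkseq.
    apply/allP => x /(nthP 0) [i]; rewrite size_mkseq => hi <-.
    by case: (hs i hi).
  apply/(uniqP 0) => i i'; rewrite !inE size_mkseq => hi hi' e.
  case: (hs i hi) => h1 h2; case: (hs i' hi') => h1' h2'.
  rewrite e in h2.
  have := pm_uniq hpm h2 h2' => /(_ (G (4 + nth 0 s i'))).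
  rewrite !in_Ek // ?phiG ?lt48 // eqxx !orbT => /(_ isT isT).
  by case/Ek_inj.
- apply/allP => i; rewrite mem_iota add0n /= => hi.
  case: (hs i hi) => h1 h2.
  case/andP: hpm => /forall_inP /(_ _ h2) /forall_inP h _.
  have : Xb b \in val c by rewrite cb val_lab // !inE eqxx.
  move/h; rewrite val_Ek // /eset card_inter2 ?Gneq // !in_Xb ?lt48 ?lt_48 //.
  by case: (nth false b i); case: (nth false b _).
Qed.

Definition qs (s : seq nat) : {set Kt V} := [set e | [exists i : 'I_4, e == Ek i (nth 0 s i)]].

Lemma in_qs s i j : s \in perms24 -> i < 4 -> j < 4 -> (Ek i j \in qs s) = (nth 0 s i == j).
Proof.
move=> hs hi hj; case: (permP hs) => _ hs4 _ _.
rewrite inE; apply/existsP/eqP => [[i' /eqP e]|<-].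
  by case: (Ek_inj hi hj (ltn_ord i') (hs4 _ (ltn_ord i')) e) => -> ->.
by exists (Ordinal hi).
Qed.

Lemma qs_Kbip s e : s \in perms24 -> e \in qs s -> e \in Kbip H.
Proof.
move=> hs; case: (permP hs) => _ hs4 _ _.
by rewrite inE => /existsP [i /eqP ->]; apply: Ek_Kbip (ltn_ord i) (hs4 _ (ltn_ord i)).
Qed.

Lemma pm_qs b s : b \in labels -> s \in perms24 -> compat b s -> is_pm_of (lab b) (qs s).
Proof.
move=> hb hs hc; case: (permP hs) => _ hs4 hcnt _.
apply/andP; split.
- apply/forall_inP => e; rewrite inE => /existsP [i /eqP ->].
  have hi := ltn_ord i; have hsi := hs4 _ hi.
  have := allP hc i; rewrite mem_iota add0n => /(_ hi) hne.
  apply/forall_inP => X; rewrite val_lab // !inE => /orP [] /eqP ->;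
    rewrite val_Ek // /eset card_inter2 ?Gneq // ?in_setC !in_Xb ?lt48 ?lt_48 //;
    by move: hne; case: (nth false b i); case: (nth false b _).
- apply/forallP => x.
  have hu := ltn_ord (phi x).
  have [a [ha pa ua]] := count1_iota (hcnt _ hu).
  apply/cards1P; exists (Ek a (nth 0 s a)); apply/setP => e; rewrite !inE.
  apply/andP/eqP => [[/existsP [i /eqP ->]]|->].
    rewrite in_Ek ?hs4 // => pi.
    by rewrite (ua _ (ltn_ord i) pi).
  split; first by apply/existsP; exists (Ordinal ha).
  by rewrite in_Ek ?hs4.
Qed.

Theorem main_sec : B_factorizable (Kbip H).
Proof.
move=> v [k [k0 [s [allPM hs]]]] hK.
have hs' : forall i, k * v i = \sum_(m <- s) m i by move=> i; rewrite -hs ffunE.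
have le_s : forall m i, m \in s -> m i <= k * v i.
  by move=> m i ms; rewrite hs' (big_rem m) //=; exact: leq_addr.
have ext : forall m, m \in s -> exists b sg, [/\ b \in labels, sg \in perms24, compat b sg,
     (forall i j, i < 4 -> j < 4 -> m (inl (Ek i j)) = (nth 0 sg i == j))
   & (forall c, m (inr c) = (c == lab b))].
  move=> m ms; have := allP allPM m ms; case/existsP => c /existsP [q /andP [hpm /eqP em]].
  have qK : {subset q <= Kbip H}.
    move=> e eq; apply/negPn/negP => eK.
    by have := le_s m (inl e) ms; rewrite hK /chi (negbTE eK) muln0 em ffunE eq.
  have [b [sg [hb cb hsg hc hq]]] := pm_extract hpm qK.
  exists b, sg; split => //.
  - by move=> i j hi hj; rewrite em ffunE hq.
  - by move=> c'; rewrite em ffunE cb.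
pose w b := v (inr (lab b)).
have Ksum : forall F, all (fun t => (t.1 < 4) && (t.2 < 4)) F ->
   \sum_(m <- s) \sum_(t <- F) m (inl (Ek t.1 t.2)) = k * size F.
  move=> F hF; rewrite exchange_big /= -sum1_size big_distrr /=.
  apply: eq_big_seq => t tF; case/andP: (allP hF t tF) => h1 h2.
  by rewrite -hs' hK /chi Ek_Kbip.
have Lsum : forall f, \sum_(m <- s) \sum_(b <- labels) f b * m (inr (lab b))
                      = k * \sum_(b <- labels) f b * w b.
  move=> f; rewrite exchange_big big_distrr /=; apply: eq_bigr => b _.
  by rewrite -big_distrr /= -hs' mulnCA.
have perm_m : forall m, m \in s -> exists b sg, [/\ b \in labels, sg \in perms24, compat b sg,
   (forall F, all (fun t => (t.1 < 4) && (t.2 < 4)) F ->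
       \sum_(t <- F) m (inl (Ek t.1 t.2)) = cnt F sg)
   & (forall f, \sum_(b' <- labels) f b' * m (inr (lab b')) = f b)].
  move=> m ms; have [b [sg [hb hsg hc hE hL]]] := ext m ms.
  exists b, sg; split => //.
  - move=> F hF; rewrite /cnt -sum_count; apply: eq_big_seq => t tF.
    by case/andP: (allP hF t tF) => h1 h2; rewrite hE.
  - move=> f; rewrite -(sum_one f labels_uniq hb); apply: eq_big_seq => b' hb'.
    rewrite hL; have [->|ne] := eqVneq b' b; first by rewrite eqxx.
    by case: eqP => // e; case/eqP: ne; exact: lab_inj.
have ineqF : forall F, F \in Flist -> \sum_(b <- labels) mn F b * w b <= size F.
  move=> F hF; have hF' : all (fun t => (t.1 < 4) && (t.2 < 4)) F.
    by have /allP := Flist_ok; apply; rewrite in_cons hF orbT.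
  rewrite -(leq_pmul2l k0) -Lsum -Ksum // !big_seq; apply: leq_sum => m ms.
  have [b [sg [hb hsg hc hE hL]]] := perm_m m ms.
  by rewrite hE // hL mn_le.
have sumw : \sum_(b <- labels) w b = 4.
  have hF : all (fun t => (t.1 < 4) && (t.2 < 4)) all16 by case/andP: Flist_ok.
  have := Lsum (fun _ => 4); rewrite (eq_big_seq (fun m : vec V => \sum_(t <- all16) m (inl (Ek t.1 t.2)))).
    rewrite Ksum // -big_distrr /= => /eqP; rewrite eqn_pmul2l //.
    by rewrite -[16]/(4 * 4) eqn_pmul2l // => /eqP.
  move=> m ms; have [b [sg [hb hsg hc hE hL]]] := perm_m m ms.
  by rewrite hE // hL; case: (permP hsg).
pose wl := [seq w b | b <- labels].
have sizewl : size wl = 35 by rewrite size_map size_labels.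
have nthwl : forall i, i < 35 -> nth 0 wl i = w (nth [::] labels i).
  by move=> i hi; rewrite (nth_map [::]) ?size_labels.
clearbody wl.
have sum_ms : forall f, \sum_(x <- expand wl) f x
                        = \sum_(i <- iota 0 35) w (nth [::] labels i) * f i.
  move=> f; rewrite /expand sum_expand_aux sizewl.
  rewrite -(big_mkord xpredT (fun i => nth 0 wl i * f (0 + i))).
  apply: eq_big_seq => i; rewrite mem_index_iota => /andP [_ hi].
  by rewrite nthwl.
have size_ms : size (expand wl) = 4.
  rewrite -sum1_size sum_ms -[RHS]sumw sum_labels; apply: eq_bigr => i _; exact: muln1.
have sum_mn : forall F, \sum_(x <- expand wl) mn F (nth [::] labels x)
                        = \sum_(b <- labels) mn F b * w b.
  by move=> F; rewrite sum_ms sum_labels; apply: eq_bigr => i _; rewrite mulnC.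
have sum_eq : forall i0, i0 < 35 -> \sum_(x <- expand wl) (x == i0) = w (nth [::] labels i0).
  move=> i0 hi0; rewrite sum_ms (sum_one (fun i => w (nth [::] labels i))) //.
  by rewrite mem_iota.
have := pw_expand_aux 0 wl; rewrite -/(expand wl) sizewl => /andP [pw hall].
move: size_ms pw hall sum_mn sum_eq.
case: (expand wl) => [|a [|b [|c [|d [|]]]]] // _.
move=> pw hall sum_mn sum_eq.
move: pw hall => /=; rewrite !add0n.
move=> /and4P [/and4P [hab _ _ _] /and3P [hbc _ _] /andP [hcd _] _] /and5P [ha hb hc hd _].
have := heavy; rewrite /heavyb /allms.
have hin : forall x y, x <= y -> y < 35 -> y \in iota x (35 - x).
  by move=> x y hxy hy; rewrite mem_iota hxy subnKC // ltnW // (leq_ltn_trans hxy hy).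
move=> /allP /(_ a (hin 0 a isT ha)) /allP /(_ b (hin a b hab hb)).
move=> /allP /(_ c (hin b c hbc hc)) /allP /(_ d (hin c d hcd hd)).
rewrite /Pfull => /orP [].
  rewrite /row /MNrows /PCs !(nth_map [::]) ?size_labels // => /viol_spec [F hF hlt].
  have := ineqF F hF; rewrite -sum_mn !big_cons big_nil addn0 !addnA.
  by rewrite leqNgt hlt.
case: findr => [[D p]|] //.
move: (mkps _ D p) => ps /and3P [/eqP hfst /allP hall' hlat].
have hpr : forall pr, pr \in ps -> [/\ pr.1 < 35, nth [::] labels pr.1 \in labels,
     pr.2 \in perms24 & compat (nth [::] labels pr.1) pr.2].
  move=> pr hp; case/andP: (hall' pr hp) => h1 h2.
  have h0 : pr.1 < 35.
    have : pr.1 \in [:: a; b; c; d] by rewrite -hfst; apply: map_f.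
    by rewrite !inE => /or4P [] /eqP ->.
  by split => //; apply: mem_nth; rewrite size_labels.
exists [seq chiEc (qs pr.2) (lab (nth [::] labels pr.1)) | pr <- ps]; split.
  apply/allP => m /mapP [pr hp ->]; case: (hpr pr hp) => _ hl hsg hcp.
  apply/existsP; exists (lab (nth [::] labels pr.1)); apply/existsP; exists (qs pr.2).
  by rewrite pm_qs // eqxx.
case=> [e|cc]; rewrite big_map.
  rewrite hK /chi; under eq_bigr => pr _ do rewrite ffunE.
  case eK: (e \in Kbip H).
    have [i [j [hi hj ->]]] := Kbip_Ek eK.
    rewrite (eq_big_seq (fun pr => (nth 0 pr.2 i == j) : nat)); last first.
      by move=> pr hp; case: (hpr pr hp) => _ _ hsg _; rewrite in_qs.
    rewrite sum_count.
    have := allP hlat i; rewrite mem_iota => /(_ hi) /allP /(_ j).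
    by rewrite mem_iota => /(_ hj) /eqP ->.
  rewrite big1_seq // => pr /andP [_ hp]; case: (hpr pr hp) => _ _ hsg _.
  suff /negbTE -> : e \notin qs pr.2 by [].
  by apply/negP => /(qs_Kbip hsg); rewrite eK.
have [b0 hb0 ->] := lab_surj cc.
under eq_bigr => pr _ do rewrite ffunE.
pose i0 := index b0 labels.
have hi0 : i0 < 35 by rewrite -size_labels index_mem.
rewrite (eq_big_seq (fun pr => (pr.1 == i0) : nat)); last first.
  move=> pr hp; case: (hpr pr hp) => h0 hl _ _.
  congr nat_of_bool; apply/eqP/eqP => [e|->]; last by rewrite nth_index.
  by rewrite /i0 -(lab_inj hl hb0 (esym e)) index_uniq ?size_labels ?labels_uniq.
rewrite -(big_map fst xpredT (fun x => (x == i0) : nat)) hfst sum_eq //.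
by rewrite nth_index.
Qed.
End Abs.

Theorem mainTheorem12 (V : finType) (H : {set V}) :
  #|V| = 8 -> #|H| = 4 -> B_factorizable (Kbip H).
Proof.
move=> cV cH.
have [x0 _] : exists x0 : V, true.
  have : 0 < #|V| by rewrite cV.
  by case/card_gt0P => x _; exists x.
pose s0 := enum H ++ enum (~: H).
have eH : size (enum H) = 4 by rewrite -cardE.
have eC : size (enum (~: H)) = 4.
  by rewrite -cardE; apply/eqP; rewrite -(eqn_add2l #|H|) cardsC cV cH.
have us : uniq s0.
  rewrite cat_uniq !enum_uniq andbT /=; apply/hasPn => x.
  by rewrite !mem_enum inE => /negbTE ->.
have ss : size s0 = 8 by rewrite size_cat eH eC.
have ins : forall x, x \in s0.
  by move=> x; rewrite mem_cat !mem_enum inE; case: (x \in H).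
pose g (i : 'I_8) := nth x0 s0 i.
pose phi (x : V) : 'I_8 := inord (index x s0).
have gK : cancel g phi.
  by move=> i; apply: val_inj; rewrite /phi /g /= index_uniq ?ss // inordK.
have phiK : cancel phi g.
  by move=> x; rewrite /g /phi inordK ?nth_index // -ss index_mem.
have gH : forall i, (g i \in H) = (i < 4).
  move=> i; rewrite /g nth_cat eH; case: ifP => hi.
    have hi' : i < size (enum H) by rewrite eH.
    by have := mem_nth x0 hi'; rewrite mem_enum.
  have hi' : i - 4 < size (enum (~: H)) by rewrite eC ltn_subLR ?addn4 // leqNgt hi.
  by have := mem_nth x0 hi'; rewrite mem_enum inE => /negbTE.
exact: main_sec gK phiK gH cV cH.
Qed.
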